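(* Fix weights $w_1,\dots,w_D>0$. For $n,N\ge 1$ let $Z_{n,N}(w_1,\dots,w_D)=\sum_{\tau}\prod_{e\in\tau}w(e)$, the sum over all perfect matchings $\tau$ of the $N$-fold blow-up $\mathbb T(n,\Lambda)_N$ of the torus $\mathbb T(n,\Lambda)$, where every lift of an edge of type $e_i$ has weight $w_i$. Then $$\lim_{n\to\infty}\lim_{N\to\infty}\frac{1}{Nn^d}\log\frac{Z_{n,N}(w_1,\dots,w_D)}{(N!)^{n^d}}=\log(w_1+\dots+w_D).$$
   Context: $\Lambda$ is a bipartite graph embedded in $\mathbb R^d$ of the following form (or a linear image of one): there are vectors $e_1,\dots,e_D\in\mathbb R^d$ spanning $\mathbb R^d$ with $\sum_{i=1}^D e_i=0$ and a vector $v_0$ with $e_i\in v_0+\mathbb Z^d$ for all $i$; the white vertices are $W=\mathbb Z^d$, the black vertices are $B=\mathbb Z^d+v_0$, and each white vertex $w$ is joined by an edge exactly to the black vertices $w+e_1,\dots,w+e_D$; $\Lambda$ is connected. An edge from $w$ to $w+e_i$ is said to be of type $e_i$. The torus $\mathbb T(n,\Lambda)=\Lambda/n\mathbb Z^d$ has $n^d$ white and $n^d$ black vertices and every vertex has degree $D$. The $N$-fold blow-up $G_N$ of a graph $G$ replaces every vertex by $N$ copies (lifts) and every edge $(u,v)$ by the complete bipartite graph between the lifts of $u$ and the lifts of $v$. *)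

(* Defs.v *)
From HB Require Import structures.
From Stdlib Require Import Relations.Relation_Operators.
From mathcomp Require Import all_boot all_order all_algebra.
From mathcomp Require Import all_classical all_reals all_analysis.
Set Implicit Arguments. Unset Strict Implicit. Unset Printing Implicit Defensive.
Import Order.TTheory GRing.Theory Num.Theory.
Local Open Scope ring_scope.

(* Combinatorial data of the lattice Lambda: e_i = v0 + a_i with a_i in Z^d.
   White vertices: Z^d (point z).  Black vertices: Z^d + v0, the black vertex
   z + v0 being encoded by z.  White z is joined to black z + a_i, i.e. to the
   point z + e_i. *)

Definition evec (R : realType) (d D : nat) (v0 : 'rV[R]_d)
  (a : 'I_D -> 'rV[int]_d) (i : 'I_D) : 'rV[R]_d :=
  v0 + map_mx (fun z : int => z%:~R) (a i).

(* vertices of Lambda: inl = white, inr = black *)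
Definition Lvert (d : nat) := ('rV[int]_d + 'rV[int]_d)%type.

Definition Ladj (d D : nat) (a : 'I_D -> 'rV[int]_d) (x y : Lvert d) : Prop :=
  match x, y with
  | inl w, inr b => exists i, b = w + a i
  | inr b, inl w => exists i, b = w + a i
  | _, _ => False
  end.

Definition Lconnected (d D : nat) (a : 'I_D -> 'rV[int]_d) : Prop :=
  forall x y : Lvert d, clos_refl_sym_trans (Lvert d) (Ladj a) x y.

(* Torus T(n, Lambda) for n >= 1: vertex classes Z^d / n Z^d, encoded as
   functions 'I_d -> 'I_n (written 'I_(n.-1.+1), which is 'I_n for n >= 1). *)
Definition tvert (n d : nat) := {ffun 'I_d -> 'I_(n.-1.+1)}.

Definition tshift (n d : nat) (x : tvert n d) (z : 'rV[int]_d) : tvert n d :=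
  [ffun k => inord (absz (((x k)%:Z + z ord0 k) %% (n.-1.+1)%:Z)%Z)].

(* A perfect matching chooses, for each lift (x, k) of
   the white vertex x, an edge type i and a lift l of the black vertex
   x + a_i (the edge ((x,k),(x+a_i,l)) of type i), such that every lift of
   every black vertex is used exactly once (the induced map is injective,
   hence bijective between equinumerous finite sets). *)
Definition Zpart (R : realType) (d D : nat) (a : 'I_D -> 'rV[int]_d)
  (w : 'I_D -> R) (n N : nat) : R :=
  \sum_(f : {ffun (tvert n d * 'I_N) -> ('I_D * 'I_N)} |
         injectiveb (fun p : tvert n d * 'I_N =>
                       (tshift p.1 (a (f p).1), (f p).2)))
     \prod_(p : tvert n d * 'I_N) w (f p).1.

Definition free_energy (R : realType) (d D : nat) (a : 'I_D -> 'rV[int]_d)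
  (w : 'I_D -> R) (n N : nat) : R :=
  ln (Zpart a w n N / (N`!%:R ^+ (n ^ d))) / (N * n ^ d)%:R.

(* Main.v *)
Require Import Defs.
From HB Require Import structures.
From mathcomp Require Import all_boot all_order all_algebra.
From mathcomp Require Import all_classical all_reals all_analysis.
From mathcomp Require Import all_fingroup.
From mathcomp Require Import zify ring lra.
Import Order.TTheory GRing.Theory Num.Theory.
Import numFieldNormedType.Exports.
Local Open Scope ring_scope.

Module Helpers.
Set Implicit Arguments. Unset Strict Implicit. Unset Printing Implicit Defensive.

Definition ZZ (R : numDomainType) (X : finType) (D N : nat) (sh : 'I_D -> X -> X)
  (w : 'I_D -> R) : R :=
  \sum_(f : {ffun (X * 'I_N) -> ('I_D * 'I_N)} |
         injectiveb (fun p : X * 'I_N => (sh (f p).1 p.1, (f p).2)))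
     \prod_(p : X * 'I_N) w (f p).1.

Lemma sum_sub_le (R : numDomainType) (T : finType) (A B : pred T) (F : T -> R) :
  (forall x, 0 <= F x) -> (forall x, A x -> B x) ->
  \sum_(x | A x) F x <= \sum_(x | B x) F x.
Proof.
move=> F0 sAB; rewrite [X in _ <= X](bigID A) /=.
rewrite (eq_bigl A); last by move=> x; case Ax: (A x); rewrite ?andbF ?andbT //= sAB.
by rewrite lerDl sumr_ge0.
Qed.

Lemma upper_bound (R : numDomainType) (X : finType) (D N : nat) (sh : 'I_D -> X -> X)
  (w : 'I_D -> R) : (forall i, 0 <= w i) ->
  ZZ N sh w <= (N`!%:R) ^+ #|X| * (\sum_i w i) ^+ (#|X| * N).
Proof.
move=> w0.
pose T := (X * 'I_N)%type.
pose valid (f : {ffun T -> 'I_D * 'I_N}) :=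
  injectiveb (fun p : T => (sh (f p).1 p.1, (f p).2)).
pose P (f : {ffun T -> 'I_D * 'I_N}) (y : X) : {set T} := [set p | sh (f p).1 p.1 == y].
have cardP f y : valid f -> #|P f y| = N.
  move/injectiveP=> injg.
  have -> : P f y = (fun p : T => (sh (f p).1 p.1, (f p).2)) @^-1: [set q : T | q.1 == y].
    by apply/setP => p; rewrite !inE.
  rewrite card_preimset //.
  have -> : [set q : T | q.1 == y] = finset.setX [set y] [set: 'I_N].
    by apply/setP => -[x k]; rewrite !inE andbT.
  by rewrite cardsX cards1 cardsT card_ord mul1n.
pose hh (f : {ffun T -> 'I_D * 'I_N}) : {ffun X -> {ffun 'I_N -> 'I_N}} :=
  [ffun y => [ffun j : 'I_N => (f (nth (y, j) (enum (P f y)) j)).2]].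
pose tt (f : {ffun T -> 'I_D * 'I_N}) : {ffun T -> 'I_D} := [ffun p => (f p).1].
pose Psi f := (tt f, hh f).
pose G (q : {ffun T -> 'I_D} * {ffun X -> {ffun 'I_N -> 'I_N}}) : R :=
  (\prod_p w (q.1 p)) * \prod_y (injectiveb (q.2 y))%:R.
have hrow f y : valid f -> injectiveb (hh f y).
  move=> vf; apply/injectiveP => j1 j2; rewrite !ffunE.
  have sz : size (enum (P f y)) = N by rewrite -cardE cardP.
  have m1 : nth (y, j1) (enum (P f y)) j1 \in P f y.
    by rewrite -mem_enum mem_nth // sz.
  have m2 : nth (y, j2) (enum (P f y)) j2 \in P f y.
    by rewrite -mem_enum mem_nth // sz.
  move: m1 m2; rewrite !inE => /eqP e1 /eqP e2 e.
  move/injectiveP: vf => vf.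
  have := vf _ _ (f_equal2 pair (etrans e1 (esym e2)) e).
  rewrite (set_nth_default (y, j1) (y, j2)); last by rewrite sz.
  move/eqP; rewrite nth_uniq ?sz // ?enum_uniq //.
  by move/eqP/val_inj.
have GPsi f : valid f -> G (Psi f) = \prod_p w (f p).1.
  move=> vf; rewrite /G /=.
  rewrite [X in _ * X]big1 ?mulr1; last by move=> y _; rewrite (hrow f y vf).
  by apply: eq_bigr => p _; rewrite ffunE.
have Psi_inj : {in [set f | valid f] &, injective Psi}.
  move=> f f'; rewrite !inE => vf vf' [] et eh.
  have ety p : (f p).1 = (f' p).1.
    by have := congr1 (fun t : {ffun T -> 'I_D} => t p) et; rewrite !ffunE.
  have eP y : P f y = P f' y by apply/setP => p; rewrite !inE ety.
  apply/ffunP => p.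
  set y := sh (f p).1 p.1.
  have pin : p \in enum (P f y) by rewrite mem_enum inE.
  have jlt : (index p (enum (P f y)) < N)%N by move: pin; rewrite -index_mem -cardE (cardP f y vf).
  have := congr1 (fun h : {ffun X -> {ffun 'I_N -> 'I_N}} => h y (Ordinal jlt)) eh; rewrite !ffunE /=.
  rewrite -eP !nth_index //.
  by case: (f p) (f' p) (ety p) => [i l] [i' l'] /= -> ->.
have e1 : ZZ N sh w = \sum_(f in [set f | valid f]) G (Psi f).
  by rewrite /ZZ; apply: eq_big => [f|f vf]; [rewrite inE | rewrite GPsi].
rewrite e1 -(big_imset G Psi_inj) /=.
apply: (le_trans (y := \sum_q G q)).
  rewrite [X in _ <= X](bigID (fun q => q \in Psi @: [set f | valid f])) /= lerDl.
  apply: sumr_ge0 => q _; apply: mulr_ge0; [exact: prodr_ge0 | exact: prodr_ge0].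
rewrite /G -(pair_bigA _ (fun (t : {ffun T -> 'I_D}) (h : {ffun X -> {ffun 'I_N -> 'I_N}}) =>
   (\prod_p w (t p)) * \prod_y (injectiveb (h y))%:R)) /=.
under eq_bigr do rewrite -mulr_sumr.
rewrite -mulr_suml mulrC.
have -> : \sum_(t : {ffun T -> 'I_D}) \prod_p w (t p) = (\sum_i w i) ^+ (#|X| * N).
  rewrite -(bigA_distr_bigA (fun (p : T) (i : 'I_D) => w i)) /=.
  by rewrite prodr_const card_prod card_ord.
rewrite -(bigA_distr_bigA (fun (y : X) (h : {ffun 'I_N -> 'I_N}) => (injectiveb h)%:R)) /=.
have -> : \sum_(h : {ffun 'I_N -> 'I_N}) ((injectiveb h)%:R : R) = N`!%:R.
  transitivity (\sum_(h : {ffun 'I_N -> 'I_N} | injectiveb h) (1 : R)).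
    by rewrite [RHS]big_mkcond /=; apply: eq_bigr => h _; case: (injectiveb h).
  rewrite sumr_const.
  have := card_inj_ffuns 'I_N 'I_N; rewrite card_ord ffactnn.
  move=> <-; congr (_ *+ _).
  by apply: eq_card => h; rewrite inE.
by rewrite prodr_const.
Qed.

Definition cnt (N D : nat) (s : {ffun 'I_N -> 'I_D}) : {ffun 'I_D -> 'I_N.+1} :=
  [ffun i => inord (count_mem i (codom s))].

Lemma cnt_perm (N D : nat) (s s0 : {ffun 'I_N -> 'I_D}) :
  cnt s = cnt s0 -> exists r : 'S_N, forall k, s k = s0 (r k).
Proof.
move=> e.
have ec i : count_mem i (codom s) = count_mem i (codom s0).
  have := congr1 (fun c : {ffun 'I_D -> 'I_N.+1} => nat_of_ord (c i)) e; rewrite !ffunE.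
  rewrite !inordK //; rewrite ltnS; apply: (leq_trans (count_size _ _));
    by rewrite size_codom card_ord.
have pe : perm_eq (codom s) [tuple s0 k | k < N].
  apply/allP => i _ /=; apply/eqP; rewrite ec; congr (count _ _).
have [r er] := tuple_permP pe.
exists r => k.
have : map s (enum 'I_N) = map (fun i => s0 (r i)) (enum 'I_N).
  rewrite -[LHS]/(codom s) er /=.
  by apply: eq_map => i; rewrite tnth_mktuple.
by move/eq_in_map => /(_ k); rewrite mem_enum => ->.
Qed.

Lemma lower_c (R : numDomainType) (X : finType) (D N : nat) (sh : 'I_D -> X -> X)
  (w : 'I_D -> R) : (forall i, injective (sh i)) -> (forall i, 0 <= w i) ->
  forall s0 : {ffun 'I_N -> 'I_D},
  (N`!%:R * \sum_(s | cnt s == cnt s0) \prod_k w (s k)) ^+ #|X| <= ZZ N sh w.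
Proof.
move=> sh_inj w0 s0.
pose c := cnt s0.
pose rho (s : {ffun 'I_N -> 'I_D}) : 'S_N :=
  odflt (1%g : 'S_N) [pick r : 'S_N | [forall k, s k == s0 (r k)]].
have rhoP s : cnt s = c -> forall k, s k = s0 (rho s k).
  move=> /cnt_perm [r Hr]; rewrite /rho; case: pickP => [r' /forallP H | H] k /=.
    exact/eqP/H.
  exfalso; move: (H r) => /negbT/negP; apply; apply/forallP => k'; apply/eqP; exact: Hr.
pose U := ({ffun 'I_N -> 'I_D} * {perm 'I_N})%type.
pose Phi (g : {ffun X -> U}) : {ffun X * 'I_N -> 'I_D * 'I_N} :=
  [ffun p => ((g p.1).1 p.2,
              (g (sh ((g p.1).1 p.2) p.1)).2 (rho (g p.1).1 p.2))].
pose Good := [set g : {ffun X -> U} | [forall x, cnt (g x).1 == c]].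
pose F (u : U) : R := (cnt u.1 == c)%:R * \prod_k w (u.1 k).
have sumF : \sum_u F u = N`!%:R * \sum_(s | cnt s == c) \prod_k w (s k).
  rewrite -(pair_bigA _ (fun (s : {ffun 'I_N -> 'I_D}) (r : {perm 'I_N}) =>
      (cnt s == c)%:R * \prod_k w (s k))) /=.
  under eq_bigr do rewrite sumr_const card_Sn.
  rewrite sumrMnl mulr_natl [in RHS]big_mkcond /=; congr (_ *+ _).
  by apply: eq_bigr => s _; case: (cnt s == c); rewrite ?mul1r ?mul0r.
rewrite -sumF -prodr_const.
rewrite (bigA_distr_bigA (fun (x : X) (u : U) => F u)) /=.
have stepB : \sum_(g : {ffun X -> U}) \prod_x F (g x) =
             \sum_(g in Good) \prod_p w (Phi g p).1.
  rewrite [RHS]big_mkcond /=; apply: eq_bigr => g _; rewrite inE.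
  case: (boolP [forall x, cnt (g x).1 == c]) => [/forallP H | ].
    under [RHS]eq_bigr do rewrite ffunE /=.
    rewrite -(pair_bigA _ (fun x k => w ((g x).1 k))) /=.
    by apply: eq_bigr => x _; rewrite /F (H x) mul1r.
  rewrite negb_forall => /existsP [x Hx].
  by rewrite (bigD1 x) //= /F (negbTE Hx) !mul0r.
rewrite stepB.
have validPhi g : g \in Good -> injectiveb (fun p : X * 'I_N => (sh (Phi g p).1 p.1, (Phi g p).2)).
  rewrite inE => /forallP Hg; apply/injectiveP => -[x k] [x' k']; rewrite !ffunE /=.
  case=> e1; rewrite e1 => /perm_inj e2.
  have ei : (g x).1 k = (g x').1 k'.
    by rewrite (rhoP _ (eqP (Hg x)) k) (rhoP _ (eqP (Hg x')) k') e2.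
  rewrite ei in e1; have ex := sh_inj _ _ _ e1; subst x'.
  by rewrite (perm_inj e2).
have injPhi : {in Good &, injective Phi}.
  move=> g g'; rewrite !inE => /forallP Hg /forallP Hg' e.
  have es x : (g x).1 = (g' x).1.
    apply/ffunP => k.
    by have := congr1 (fun f : {ffun X * 'I_N -> 'I_D * 'I_N} => (f (x, k)).1) e; rewrite !ffunE.
  have ep y : (g y).2 = (g' y).2.
    apply/permP => j.
    have [u hu1 hu2] := injF_bij (sh_inj (s0 j)).
    have := congr1 (fun f : {ffun X * 'I_N -> 'I_D * 'I_N} =>
                      (f (u y, ((rho (g (u y)).1)^-1)%g j)).2) e; rewrite !ffunE /= -es.
    have hk : (g (u y)).1 (((rho (g (u y)).1)^-1)%g j) = s0 j.
      by rewrite (rhoP _ (eqP (Hg (u y)))) permKV.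
    by rewrite hk hu2 permKV.
  apply/ffunP => x.
  by rewrite [g x]surjective_pairing [g' x]surjective_pairing es ep.
rewrite -(big_imset (fun f : {ffun X * 'I_N -> 'I_D * 'I_N} => \prod_p w (f p).1) injPhi) /=.
rewrite /ZZ; apply: sum_sub_le.
  by move=> f; apply: prodr_ge0.
move=> f /imsetP [g gG ->]; exact: validPhi.
Qed.

Lemma lower_bound (R : realFieldType) (X : finType) (D N : nat) (sh : 'I_D -> X -> X)
  (w : 'I_D -> R) : (forall i, injective (sh i)) -> (forall i, 0 < w i) -> (0 < D)%N ->
  (N`!%:R * ((\sum_i w i) ^+ N / (N.+1)%:R ^+ D)) ^+ #|X| <= ZZ N sh w.
Proof.
move=> sh_inj w0 D0.
have w0' i : 0 <= w i by apply: ltW.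
have S0 : 0 < \sum_i w i.
  rewrite (bigD1 (Ordinal D0)) //=; apply: lt_le_trans (w0 (Ordinal D0)) _.
  by rewrite lerDl; apply: sumr_ge0 => i _.
pose W (c : {ffun 'I_D -> 'I_N.+1}) := \sum_(s | cnt s == c) \prod_k w (s k).
have eS : (\sum_i w i) ^+ N = \sum_c W c.
  rewrite -[in LHS](card_ord N) -prodr_const.
  rewrite (bigA_distr_bigA (fun (k : 'I_N) (i : 'I_D) => w i)) /=.
  by rewrite (partition_big (fun s => cnt s) predT) //.
pose K : R := (N.+1)%:R ^+ D.
have K0 : 0 < K by rewrite exprn_gt0 // ltr0n.
have cardK : #|{: {ffun 'I_D -> 'I_N.+1}}|%:R = K.
  by rewrite card_ffun !card_ord natrX.
have [c Hc] : exists c, (\sum_i w i) ^+ N / K <= W c.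
  apply/existsP; apply: contraT; rewrite negb_exists => /forallP H.
  have : \sum_(c : {ffun 'I_D -> 'I_N.+1}) W c <
         \sum_(c : {ffun 'I_D -> 'I_N.+1}) (\sum_i w i) ^+ N / K.
    apply: ltr_sum.
      by apply/hasP; exists [ffun => ord0]; rewrite ?mem_index_enum.
    by move=> d _; rewrite ltNge H.
  by rewrite -eS sumr_const -mulr_natr cardK mulfVK ?ltxx // gt_eqF.
have Wpos : 0 < W c by apply: lt_le_trans Hc; rewrite divr_gt0 // exprn_gt0.
case: (pickP (fun s : {ffun 'I_N -> 'I_D} => cnt s == c)) => [s0 /eqP Hs0 | H]; last first.
  by move: Wpos; rewrite /W big_pred0 // ltxx.
apply: le_trans (lower_c sh_inj w0' s0).
rewrite Hs0; apply: lerXn2r; rewrite ?nnegrE.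
- by apply: mulr_ge0 => //; apply: divr_ge0; [apply: exprn_ge0; apply: ltW | apply: ltW].
- by apply: mulr_ge0 => //; apply: ltW.
- by rewrite ler_pM2l ?ltr0n ?fact_gt0.
Qed.

Lemma modz_ge0' (x : int) (m : nat) : (0 < m)%N -> 0 <= (x %% m%:Z)%Z.
Proof. by move=> m0; rewrite modz_ge0 // eqz_nat -lt0n. Qed.

Lemma tshift_val (n d : nat) (x : tvert n d) (z : 'rV[int]_d) k :
  ((tshift x z k : nat) : int) = (((x k)%:Z + z ord0 k) %% (n.-1.+1)%:Z)%Z.
Proof.
rewrite ffunE inordK; first by rewrite gez0_abs // modz_ge0'.
have := ltz_pmod ((x k)%:Z + z ord0 k) (isT : (0 < (n.-1.+1)%:Z)).
by rewrite -[X in (X < _)%R](@gez0_abs _) ?modz_ge0' // ltz_nat.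
Qed.

Lemma tshiftK (n d : nat) (z : 'rV[int]_d) (x : tvert n d) :
  tshift (tshift x z) (- z) = x.
Proof.
apply/ffunP => k; apply: val_inj; apply/eqP; rewrite -eqz_nat tshift_val tshift_val.
rewrite modzDml mxE addrK modz_small //; apply/andP; split => //.
by rewrite ltz_nat.
Qed.

Lemma tshift_inj (n d : nat) (z : 'rV[int]_d) : injective (fun x : tvert n d => tshift x z).
Proof. by move=> x y e; rewrite -(@tshiftK n d z x) -(@tshiftK n d z y) e. Qed.

Local Open Scope classical_set_scope.
Local Open Scope ring_scope.

Lemma ln_le_sqrt (R : realType) (y : R) : 0 < y -> ln y <= 2 * Num.sqrt y.
Proof.
move=> y0.
have sy0 : 0 < Num.sqrt y by rewrite sqrtr_gt0.
have -> : y = Num.sqrt y ^+ 2 by rewrite sqr_sqrtr // ltW.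
rewrite lnXn // sqrtr_sqr ger0_norm; last exact: ltW.
rewrite -[X in X <= _]mulr_natl; apply: ler_wpM2l => //; apply: ltW; exact: ln_sublinear.
Qed.

Lemma lnN (R : realType) : (fun N : nat => ln (N.+1%:R : R) / N%:R) @ \oo --> (0 : R).
Proof.
apply/cvgrPdist_le => e e0.
pose M := (Num.bound (8 / (e * e))).+1.
exists M => // N /= HN.
have N0 : (0 < N)%N by apply: leq_trans HN.
have N0r : (0 : R) < N%:R by rewrite ltr0n.
rewrite sub0r normrN ger0_norm; last first.
  by apply: divr_ge0 => //; apply: ln_ge0; rewrite ler1n.
rewrite ler_pdivrMr //.
have hp : (0:R) < N.+1%:R by rewrite ltr0n.
apply: le_trans (ln_le_sqrt hp) _.
have he : 8 / (e * e) < N%:R.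
  apply: lt_le_trans (archi_boundP _) _; first by apply: divr_ge0 => //; apply: mulr_ge0; apply: ltW.
  by rewrite ler_nat; apply: leq_trans HN.
rewrite -(ger0_norm (ltW (mulr_gt0 e0 N0r))) -(ger0_norm (mulr_ge0 (ler0n R 2) (sqrtr_ge0 _))).
rewrite -ler_sqr ?nnegrE ?normr_ge0 // !real_normK ?num_real //.
rewrite exprMn sqr_sqrtr ?ler0n // exprMn.
have h1 : N.+1%:R <= 2 * N%:R :> R by rewrite -natrM ler_nat; lia.
rewrite (le_trans (ler_wpM2l _ h1)) //.
have h8 : 8 < e * e * N%:R by rewrite -ltr_pdivrMl ?mulr_gt0 // mulrC.
rewrite !expr2; nra.
Qed.

Lemma alg_e1 (R : realFieldType) (s l : R) (N V D : nat) : (N%:R : R) != 0 ->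
  (s - D%:R * (l / N%:R)) * (N * V)%:R = (s *+ N - l *+ D) *+ V.
Proof.
move=> nz; rewrite natrM -(mulr_natr s N) -(mulr_natr l D).
rewrite -(mulr_natr (s * N%:R - l * D%:R) V).
field. exact: nz.
Qed.

Lemma bnd_gen (R : realType) (Z S : R) (V N D : nat) :
  (0 < V)%N -> (0 < N)%N -> 0 <= Z -> (D = 0%N -> S = 0) -> ((0 < D)%N -> 0 < S) ->
  Z <= N`!%:R ^+ V * S ^+ (V * N) ->
  ((0 < D)%N -> (N`!%:R * (S ^+ N / (N.+1)%:R ^+ D)) ^+ V <= Z) ->
  ln S - D%:R * (ln (N.+1%:R : R) / N%:R) <= ln (Z / N`!%:R ^+ V) / (N * V)%:R <= ln S.
Proof.
move=> V0 N0 Zge0 SD0 SD ub lbD.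
have N0r : (0 : R) < N%:R by rewrite ltr0n.
have F0 : (0 : R) < N`!%:R ^+ V by rewrite exprn_gt0 // ltr0n fact_gt0.
have NV0 : (0 : R) < (N * V)%:R by rewrite ltr0n muln_gt0 N0 V0.
case: (posnP D) => [D0 | D0].
  have S0 := SD0 D0.
  have Z0 : Z = 0.
    apply/eqP; rewrite eq_le Zge0 andbT; apply: le_trans ub _.
    by rewrite S0 expr0n muln_eq0 !eqn0Ngt V0 N0 /= mulr0.
  by rewrite Z0 S0 mul0r ln0 // mul0r D0 mul0r subr0 lexx.
have S0 := SD D0.
have lb := lbD D0.
pose K : R := (N.+1)%:R ^+ D.
have K0 : 0 < K by rewrite exprn_gt0 // ltr0n.
pose x := S ^+ N / K.
have x0 : 0 < x by rewrite divr_gt0 // exprn_gt0.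
have lb' : N`!%:R ^+ V * x ^+ V <= Z by rewrite -exprMn.
pose Q := Z / N`!%:R ^+ V.
have Qlo : x ^+ V <= Q by rewrite /Q ler_pdivlMr // mulrC.
have Qhi : Q <= S ^+ (V * N) by rewrite /Q ler_pdivrMr // mulrC.
have Q0 : 0 < Q by apply: lt_le_trans Qlo; rewrite exprn_gt0.
have lnQhi : ln Q <= ln S *+ (V * N).
  by rewrite -lnXn // ler_ln // ?posrE // exprn_gt0.
have lnQlo : ln x *+ V <= ln Q.
  by rewrite -lnXn // ler_ln // ?posrE // exprn_gt0.
have lnx : ln x = ln S *+ N - ln (N.+1%:R : R) *+ D.
  by rewrite /x ln_div ?posrE ?exprn_gt0 // lnXn // /K lnXn // ltr0n.
have e1 : (ln S - D%:R * (ln (N.+1%:R : R) / N%:R)) * (N * V)%:R = ln x *+ V.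
  by rewrite lnx alg_e1 // lt0r_neq0.
have h1 : ln S - D%:R * (ln (N.+1%:R : R) / N%:R) <= ln (Z / N`!%:R ^+ V) / (N * V)%:R.
  rewrite ler_pdivlMr // e1. exact lnQlo.
have h2 : ln (Z / N`!%:R ^+ V) / (N * V)%:R <= ln S.
  rewrite ler_pdivrMr //; apply: le_trans lnQhi _.
  by rewrite mulr_natr mulnC.
by rewrite h1 h2.
Qed.

End Helpers.
Import Helpers.
Local Open Scope classical_set_scope.
Local Open Scope ring_scope.

Theorem mainTheorem1 (R : realType) (d D : nat) (v0 : 'rV[R]_d)
  (a : 'I_D -> 'rV[int]_d) (w : 'I_D -> R)
  (ha_inj : injective a)
  (hsum : \sum_(i < D) evec v0 a i = 0)
  (hspan : row_full (\matrix_(i < D) evec v0 a i))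
  (hconn : Lconnected a)
  (hw : forall i, 0 < w i) :
  exists L : nat -> R,
    (forall n : nat, (0 < n)%N ->
       (fun N : nat => free_energy a w n N) @ \oo --> L n) /\
    L @ \oo --> ln (\sum_(i < D) w i).
Proof.
exists (fun _ => ln (\sum_(i < D) w i)); split; last exact: cvg_cst.
move=> n n0.
set S := \sum_(i < D) w i.
pose V := (n ^ d)%N.
have cardX : #|{: tvert n d}| = V by rewrite card_ffun !card_ord prednK.
have sh_inj i : injective (fun x : tvert n d => tshift x (a i)).
  by move=> x y; apply: tshift_inj.
have eZ N : Zpart a w n N = ZZ N (fun i (x : tvert n d) => tshift x (a i)) w by [].
have V0 : (0 < V)%N by rewrite expn_gt0 n0.
have w0' i : 0 <= w i by apply: ltW.
have ub N : Zpart a w n N <= N`!%:R ^+ V * S ^+ (V * N).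
  by rewrite eZ -cardX; apply: upper_bound.
have Zge0 N : 0 <= Zpart a w n N by apply: sumr_ge0 => f _; apply: prodr_ge0.
pose low (N : nat) := ln S - D%:R * (ln (N.+1%:R : R) / N%:R).
have Lc : low @ \oo --> ln S.
  have := cvgB (cvg_cst (ln S)) (cvgM (cvg_cst (D%:R : R)) (@lnN R)).
  by rewrite mulr0 subr0 => h; exact: h.
have bnd N : (0 < N)%N -> low N <= free_energy a w n N <= ln S.
  move=> N0; rewrite /free_energy -/V; apply: bnd_gen => //.
  - by move=> D0; rewrite /S; apply: big1 => -[i hi] _; exfalso; move: (leq_trans hi (eq_leq D0)).
  - move=> D0; rewrite /S (bigD1 (Ordinal D0)) //=; apply: lt_le_trans (hw (Ordinal D0)) _.
    by rewrite lerDl; apply: sumr_ge0 => i _.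
  - move=> D0; rewrite eZ -cardX; exact: lower_bound.
apply: (squeeze_cvgr _ Lc (cvg_cst (ln S))).
exists 1%N => // N /= HN; exact: bnd.
Qed.
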